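(* For a non-negative integer $n$ let $a_n\langle n!\rangle=\sum_{k=0}^{\infty}k^n\,2^{-k}$ (with $0^0=1$); these are integers $2,2,6,26,150,1082,\dots$. For every natural number $n$ such that $n+1$ is prime, \[ a_n\langle n!\rangle\equiv 0 \pmod{n+1}. \] *)

(* Defs.v *)
From Stdlib Require Import Reals ZArith Znumtheory.
From Coquelicot Require Import Coquelicot.
Open Scope R_scope.

(* a_n<n!> = sum_{k>=0} k^n 2^{-k}, with 0^0 = 1 (Stdlib's pow 0 0 = 1). *)
Definition a_fact (n : nat) : R := Series (fun k : nat => INR k ^ n / 2 ^ k).

(* Main.v *)
Require Import Defs.
From Stdlib Require Import Reals ZArith Znumtheory Lia Lra.
From Coquelicot Require Import Coquelicot.
From mathcomp Require ssreflect ssrbool ssrnat div prime binomial.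

Module FermatAux.
Import ssreflect ssrbool ssrnat div prime binomial.

Lemma expn_pow a k : expn a k = Nat.pow a k.
Proof. elim: k => [|k IH] //. by rewrite expnS IH. Qed.

Lemma aux (A a p q1 q2 r : nat) : A = (q1*p + r)%coq_nat -> a = (q2*p+r)%coq_nat ->
  (Z.of_nat A - Z.of_nat a = (Z.of_nat q1 - Z.of_nat q2) * Z.of_nat p)%Z.
Proof. move=> -> ->. rewrite !Nat2Z.inj_add !Nat2Z.inj_mul. ring. Qed.

Lemma fermatZ (p a : nat) : Znumtheory.prime (Z.of_nat p) ->
  (Z.of_nat p | Z.of_nat (Nat.pow a p) - Z.of_nat a)%Z.
Proof.
move=> hp.
have pP : prime.prime p.
  apply/primeP; split.
    have := prime_ge_2 _ hp. move=> h. apply/ltP. lia.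
  move=> d /dvdnP [k hk].
  have hd : (Z.of_nat d | Z.of_nat p)%Z.
    rewrite mulnE in hk. exists (Z.of_nat k). rewrite hk. lia.
  have := prime_divisors _ hp _ hd. move=> H.
  apply/orP.
  have : (d = 1)%nat \/ d = p by lia.
  by case=> ->; [left|right].
have hf := fermat_little a pP.
have e1 := divn_eq (expn a p) p.
have e2 := divn_eq a p.
rewrite hf in e1.
rewrite -expn_pow.
exists (Z.of_nat (expn a p %/ p) - Z.of_nat (a %/ p))%Z.
rewrite mulnE addnE in e1. rewrite mulnE addnE in e2. exact: (aux _ _ _ _ _ _ e1 e2).
Qed.
End FermatAux.
Open Scope R_scope.

Lemma lim_inv_S : is_lim_seq (fun k => / INR (S k)) 0.
Proof.
  assert (H : is_lim_seq (fun k => INR (S k)) p_infty).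
  { apply (is_lim_seq_incr_1 INR p_infty). apply is_lim_seq_INR. }
  pose proof (is_lim_seq_inv _ _ H) as H2. simpl in H2. apply H2. discriminate.
Qed.

Lemma lim_pow_1 (n : nat) : is_lim_seq (fun k => (1 + / INR (S k)) ^ n) 1.
Proof.
  induction n as [|n IH]; simpl.
  - apply is_lim_seq_const.
  - pose proof (is_lim_seq_mult' _ _ _ _ (is_lim_seq_plus' _ _ _ _ (is_lim_seq_const 1) lim_inv_S) IH) as K.
    rewrite Rplus_0_r, Rmult_1_r in K. exact K.
Qed.

Lemma ex_u (n : nat) : ex_series (fun k => INR k ^ n / 2 ^ k).
Proof.
  apply (proj2 (ex_series_incr_1 _)).
  apply ex_series_Rabs.
  apply (ex_series_DAlembert _ (/2)); [lra| |].
  - intros k. apply Rmult_integral_contrapositive_currified.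
    + apply pow_nonzero. apply not_0_INR. discriminate.
    + apply Rinv_neq_0_compat. apply pow_nonzero. lra.
  - apply is_lim_seq_ext with (u := fun k => (1 + / INR (S k)) ^ n * / 2).
    + intros k.
      assert (hk : 0 < INR (S k)) by (apply lt_0_INR; lia).
      assert (hi : 0 < / INR (S k)) by (apply Rinv_0_lt_compat; auto).
      assert (E : INR (S (S k)) ^ n / 2 ^ S (S k) / (INR (S k) ^ n / 2 ^ S k)
                  = (1 + / INR (S k)) ^ n * / 2).
      { rewrite (S_INR (S k)).
        replace (INR (S k) + 1) with (INR (S k) * (1 + / INR (S k))) by (field; lra).
        rewrite Rpow_mult_distr.
        simpl (2 ^ S (S k)). simpl (2 ^ S k). field.
        split; [apply pow_nonzero; lra| apply pow_nonzero; lra]. }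
      rewrite E. symmetry. apply Rabs_pos_eq.
      apply Rmult_le_pos; [apply pow_le; lra|lra].
    + pose proof (is_lim_seq_mult' _ _ _ _ (lim_pow_1 n) (is_lim_seq_const (/2))) as K.
      rewrite Rmult_1_l in K. exact K.
Qed.

Lemma lin (f : nat -> R) (N : nat) :
  ex_series (fun k => sum_f_R0 (fun j => f j * INR k ^ j) N / 2 ^ k) /\
  Series (fun k => sum_f_R0 (fun j => f j * INR k ^ j) N / 2 ^ k) = sum_f_R0 (fun j => f j * a_fact j) N.
Proof.
  induction N as [|N [IHe IHs]].
  - simpl.
    split.
    + apply ex_series_ext with (a := fun k => scal (f 0%nat) (INR k ^ 0 / 2 ^ k)).
      * intros k. unfold scal; simpl. unfold mult; simpl. simpl. field. apply pow_nonzero; lra.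
      * apply (@ex_series_scal_l R_AbsRing R_NormedModule). apply ex_u.
    + unfold a_fact. rewrite <- Series_scal_l. apply Series_ext. intros k. simpl. field. apply pow_nonzero; lra.
  - assert (E : forall k, sum_f_R0 (fun j => f j * INR k ^ j) (S N) / 2 ^ k
       = sum_f_R0 (fun j => f j * INR k ^ j) N / 2 ^ k + f (S N) * (INR k ^ S N / 2 ^ k)).
    { intros k. rewrite tech5. field. apply pow_nonzero; lra. }
    assert (ex2 : ex_series (fun k => f (S N) * (INR k ^ S N / 2 ^ k))).
    { apply ex_series_ext with (a := fun k => scal (f (S N)) (INR k ^ S N / 2 ^ k)).
      - intros k. reflexivity.
      - apply (@ex_series_scal_l R_AbsRing R_NormedModule). apply ex_u. }
    split.
    + apply ex_series_ext with (a := fun k => plus (sum_f_R0 (fun j => f j * INR k ^ j) N / 2 ^ k) (f (S N) * (INR k ^ S N / 2 ^ k))).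
      * intros k. rewrite E. reflexivity.
      * apply (@ex_series_plus R_AbsRing R_NormedModule); assumption.
    + rewrite (Series_ext _ _ E). rewrite Series_plus; try assumption.
      rewrite IHs, Series_scal_l, tech5. reflexivity.
Qed.

Definition T (n : nat) (c : R) := Series (fun k => (INR k + c) ^ n / 2 ^ k).

Lemma T_ex_eq n c : ex_series (fun k => (INR k + c) ^ n / 2 ^ k) /\
  T n c = sum_f_R0 (fun j => Binomial.C n j * c ^ (n - j) * a_fact j) n.
Proof.
  destruct (lin (fun j => Binomial.C n j * c ^ (n - j)) n) as [He Hs].
  assert (E : forall k, sum_f_R0 (fun j => Binomial.C n j * c ^ (n - j) * INR k ^ j) n / 2 ^ k
              = (INR k + c) ^ n / 2 ^ k).
  { intros k. rewrite binomial. f_equal. apply sum_eq. intros i _. ring. }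
  split.
  - exact (ex_series_ext _ _ E He).
  - unfold T. rewrite <- (Series_ext _ _ E), Hs. reflexivity.
Qed.

Lemma T_shift n c : T n c = c ^ n + / 2 * T n (c + 1).
Proof.
  unfold T. rewrite Series_incr_1 by apply (proj1 (T_ex_eq n c)).
  rewrite <- Series_scal_l. simpl (INR 0). simpl (2 ^ 0).
  f_equal.
  - rewrite Rplus_0_l. unfold Rdiv. rewrite Rinv_1. ring.
  - apply Series_ext. intros k. rewrite S_INR. simpl (2 ^ S k). replace (INR k + 1 + c) with (INR k + (c + 1)) by ring. field. apply pow_nonzero; lra.
Qed.

Lemma a_T n : a_fact n = T n 0.
Proof. unfold a_fact, T. apply Series_ext. intros k. rewrite Rplus_0_r. reflexivity. Qed.
Definition IsZ (x : R) := exists z : Z, x = IZR z.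

Lemma IsZ_IZR z : IsZ (IZR z). Proof. exists z; reflexivity. Qed.
Lemma IsZ_INR k : IsZ (INR k). Proof. exists (Z.of_nat k). apply INR_IZR_INZ. Qed.
Lemma IsZ_plus x y : IsZ x -> IsZ y -> IsZ (x + y).
Proof. intros [a ->] [b ->]. exists (a + b)%Z. rewrite plus_IZR. reflexivity. Qed.
Lemma IsZ_mult x y : IsZ x -> IsZ y -> IsZ (x * y).
Proof. intros [a ->] [b ->]. exists (a * b)%Z. rewrite mult_IZR. reflexivity. Qed.
Lemma IsZ_pow x k : IsZ x -> IsZ (x ^ k).
Proof. intros [a ->]. exists (a ^ Z.of_nat k)%Z. rewrite pow_IZR. reflexivity. Qed.
Lemma IsZ_sum (f : nat -> R) N : (forall i, (i <= N)%nat -> IsZ (f i)) -> IsZ (sum_f_R0 f N).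
Proof.
  induction N as [|N IH]; intros H; simpl.
  - apply H; lia.
  - apply IsZ_plus; [apply IH; intros; apply H; lia| apply H; lia].
Qed.

Lemma C_n_0' n : Binomial.C n 0 = 1.
Proof. unfold Binomial.C. rewrite Nat.sub_0_r. simpl (fact 0). simpl (INR 1). field. apply INR_fact_neq_0. Qed.
Lemma C_n_n' n : Binomial.C n n = 1.
Proof. unfold Binomial.C. rewrite Nat.sub_diag. simpl (fact 0). simpl (INR 1). field. apply INR_fact_neq_0. Qed.

Lemma IsZ_C n : forall j, (j <= n)%nat -> IsZ (Binomial.C n j).
Proof.
  induction n as [|n IH]; intros j hj.
  - replace j with 0%nat by lia. rewrite C_n_0'. exists 1%Z; reflexivity.
  - destruct j as [|i].
    + rewrite C_n_0'. exists 1%Z; reflexivity.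
    + destruct (Nat.eq_dec i n) as [->|hne].
      * rewrite C_n_n'. exists 1%Z; reflexivity.
      * rewrite <- pascal by lia. apply IsZ_plus; apply IH; lia.
Qed.

Lemma a0 : a_fact 0 = 2.
Proof.
  rewrite a_T. pose proof (T_shift 0 0) as H.
  rewrite (proj2 (T_ex_eq 0 (0 + 1))) in H. simpl in H.
  rewrite C_n_0', <- a_T in H. rewrite <- a_T.
  lra.
Qed.

Lemma a_rec n : a_fact (S n) = sum_f_R0 (fun j => Binomial.C (S n) j * a_fact j) n.
Proof.
  pose proof (T_shift (S n) 0) as H.
  rewrite (proj2 (T_ex_eq (S n) (0 + 1))) in H. rewrite <- a_T in H.
  rewrite tech5 in H. rewrite C_n_n', Nat.sub_diag in H.
  assert (E : sum_f_R0 (fun j => Binomial.C (S n) j * (0 + 1) ^ (S n - j) * a_fact j) n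
            = sum_f_R0 (fun j => Binomial.C (S n) j * a_fact j) n).
  { apply sum_eq. intros i _. rewrite Rplus_0_l, pow1. ring. }
  rewrite E in H. simpl pow in H. lra.
Qed.

Lemma IsZ_a n : IsZ (a_fact n).
Proof.
  assert (H : forall N m, (m <= N)%nat -> IsZ (a_fact m)).
  { induction N as [|N IH]; intros m hm.
    - replace m with 0%nat by lia. rewrite a0. exists 2%Z. reflexivity.
    - destruct m as [|m].
      + rewrite a0. exists 2%Z. reflexivity.
      + rewrite a_rec. apply IsZ_sum. intros i hi.
        apply IsZ_mult; [apply IsZ_C; lia| apply IH; lia]. }
  apply (H n n). lia.
Qed.

Lemma ferm1 (n i : nat) : prime (Z.of_nat (n + 1)) -> (1 <= i <= n)%nat ->
  exists z, INR i ^ n - 1 = INR (n + 1) * IZR z.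
Proof.
  intros hp hi.
  pose proof (FermatAux.fermatZ (n + 1) i hp) as H.
  rewrite Nat2Z.inj_pow in H.
  replace (Z.of_nat i ^ Z.of_nat (n + 1) - Z.of_nat i)%Z
    with (Z.of_nat i * (Z.of_nat i ^ Z.of_nat n - 1))%Z in H
    by (rewrite Nat2Z.inj_add, Z.pow_add_r by lia; rewrite Z.pow_1_r; ring).
  destruct (prime_mult _ hp _ _ H) as [Hd|Hd].
  - apply Z.divide_pos_le in Hd; lia.
  - destruct Hd as [z hz]. exists z.
    rewrite !INR_IZR_INZ. rewrite pow_IZR.
    replace 1 with (IZR 1) by reflexivity. rewrite <- minus_IZR, hz, mult_IZR. ring.
Qed.

Lemma ferm2 (n : nat) : prime (Z.of_nat (n + 1)) ->
  exists z, 2 ^ (n + 1) - 2 = INR (n + 1) * IZR z.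
Proof.
  intros hp.
  destruct (FermatAux.fermatZ (n + 1) 2 hp) as [z hz]. exists z.
  replace 2 with (INR 2) by (simpl; ring).
  rewrite <- pow_INR, !INR_IZR_INZ, <- minus_IZR, hz, mult_IZR. ring.
Qed.

Fixpoint W (n i : nat) : R :=
  match i with 0%nat => 0 | S i => 2 * W n i + 2 * INR i ^ n end.

Lemma T_W n i : T n (INR i) = 2 ^ i * a_fact n - W n i.
Proof.
  induction i as [|i IH].
  - simpl. rewrite <- a_T. ring.
  - pose proof (T_shift n (INR i)) as H. rewrite S_INR. simpl W. simpl pow.
    lra.
Qed.

Lemma W_mod n : prime (Z.of_nat (n + 1)) -> (1 <= n)%nat ->
  forall i, (1 <= i <= n + 1)%nat -> exists z, W n i = 2 ^ i - 2 + INR (n + 1) * IZR z.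
Proof.
  intros hp hn i. induction i as [|i IH]; intros hi; [lia|].
  destruct i as [|i].
  - exists 0%Z. simpl. rewrite pow_i by lia. ring.
  - destruct IH as [z hz]; [lia|].
    destruct (ferm1 n (S i) hp) as [z' hz']; [lia|].
    exists (2 * z + 2 * z')%Z. change (W n (S (S i))) with (2 * W n (S i) + 2 * INR (S i) ^ n). rewrite hz.
    rewrite plus_IZR, !mult_IZR. replace (2 ^ S (S i)) with (2 * 2 ^ S i) by (simpl; ring). lra.
Qed.

Definition MP (P x : R) := exists z : Z, x = P * IZR z.

Lemma MP_sum P (f : nat -> R) N : (forall i, (i <= N)%nat -> MP P (f i)) -> MP P (sum_f_R0 f N).
Proof.
  induction N as [|N IH]; intros H; simpl.
  - apply H; lia.
  - destruct IH as [a ha]; [intros; apply H; lia|].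
    destruct (H (S N)) as [b hb]; [lia|].
    exists (a + b)%Z. rewrite ha, hb, plus_IZR. ring.
Qed.

Theorem mainTheorem4 (n : nat) (hp : prime (Z.of_nat (n + 1))) :
  exists m : Z, a_fact n = IZR m /\ (Z.of_nat (n + 1) | m)%Z.
Proof.
  destruct (IsZ_a n) as [m0 hm0]. exists m0. split; [exact hm0|].
  assert (hn : (1 <= n)%nat).
  { destruct n; [|lia]. apply prime_ge_2 in hp. simpl in hp. lia. }
  set (P := INR (n + 1)).
  pose proof (T_W n (n + 1)) as H1.
  rewrite (proj2 (T_ex_eq n (INR (n + 1)))) in H1.
  destruct n as [|m]; [lia|].
  rewrite tech5, C_n_n', Nat.sub_diag in H1.
  assert (HY : MP P (sum_f_R0 (fun j => Binomial.C (S m) j * INR (S m + 1) ^ (S m - j) * a_fact j) m)).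
  { apply MP_sum. intros j hj.
    replace (S m - j)%nat with (S (m - j)) by lia.
    destruct (IsZ_mult _ _ (IsZ_mult _ _ (IsZ_C (S m) j ltac:(lia)) (IsZ_pow _ (m - j) (IsZ_INR (S m + 1)))) (IsZ_a j)) as [y hy].
    exists y. rewrite <- hy. unfold P. change (INR (S m + 1) ^ S (m - j)) with (INR (S m + 1) * INR (S m + 1) ^ (m - j)). ring. }
  destruct HY as [y hy].
  destruct (W_mod (S m) hp hn (S m + 1)) as [z hz]; [lia|].
  destruct (ferm2 (S m) hp) as [z2 hz2].
  rewrite hy, hz in H1. rewrite pow_O in H1. fold P in H1, hz2.
  assert (E : IZR m0 = P * IZR (z2 + z + y - z2 * m0)).
  { rewrite minus_IZR, !plus_IZR, mult_IZR. rewrite <- hm0.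
    assert (E2 : (2 ^ (S m + 1) - 1) * a_fact (S m) = P * IZR z2 + P * IZR z + P * IZR y) by lra.
    replace (a_fact (S m)) with ((2 ^ (S m + 1) - 1) * a_fact (S m) - (2 ^ (S m + 1) - 2) * a_fact (S m)) at 1 by ring.
    rewrite E2, hz2. ring. }
  unfold P in E. rewrite INR_IZR_INZ, <- mult_IZR in E. apply eq_IZR in E.
  exists (z2 + z + y - z2 * m0)%Z. rewrite Z.mul_comm. exact E.
Qed.
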